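(* Let $G$ be a graph with adjacency matrix $A$, signless Laplacian $Q$, and maximum degree $\Delta$. (i) If $0\le\alpha\le1/2$, then $\rho(A_\alpha(G))\le\alpha\rho(Q)+(1-2\alpha)\rho(A)$. If $G$ is connected and irregular, equality holds if and only if $\alpha=0$ or $\alpha=1/2$. (ii) If $1/2\le\alpha\le1$, then $\rho(A_\alpha(G))\le(1-\alpha)\rho(Q)+(2\alpha-1)\Delta$. If $G$ is connected and irregular, equality holds if and only if $\alpha=1/2$ or $\alpha=1$.
   Context: For a graph $G$, $A(G)$ is the adjacency matrix, $D(G)$ the diagonal degree matrix, $Q(G)=D(G)+A(G)$ the signless Laplacian, and $A_\alpha(G)=\alpha D(G)+(1-\alpha)A(G)$ for $\alpha\in[0,1]$. $\rho(M)$ is the largest eigenvalue of a real symmetric matrix $M$. A graph is irregular if not all its vertices have the same degree. *)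

(* Defs.v *)
From HB Require Import structures.
From mathcomp Require Import all_boot all_order all_algebra.
Set Implicit Arguments. Unset Strict Implicit. Unset Printing Implicit Defensive.
Import Order.TTheory GRing.Theory Num.Theory.
Local Open Scope ring_scope.

Definition simple_graph n (e : rel 'I_n) := symmetric e /\ irreflexive e.

Definition deg n (e : rel 'I_n) (i : 'I_n) : nat := #|[pred j | e i j]|.

Definition maxdeg n (e : rel 'I_n) : nat := (\max_(i : 'I_n) deg e i)%N.

Definition connected_graph n (e : rel 'I_n) := forall x y : 'I_n, connect e x y.

Definition irregular n (e : rel 'I_n) := exists i j : 'I_n, deg e i <> deg e j.

Definition adjmx (R : nzRingType) n (e : rel 'I_n) : 'M[R]_n :=
  \matrix_(i, j) (e i j)%:R.

Definition degmx (R : nzRingType) n (e : rel 'I_n) : 'M[R]_n :=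
  diag_mx (\row_i (deg e i)%:R).

Definition Qmx (R : nzRingType) n (e : rel 'I_n) : 'M[R]_n := degmx R e + adjmx R e.

Definition Aalpha (R : comNzRingType) n (e : rel 'I_n) (a : R) : 'M[R]_n :=
  a *: degmx R e + (1 - a) *: adjmx R e.

Definition is_rho (R : numFieldType) n (M : 'M[R]_n) (r : R) :=
  eigenvalue M r /\ forall a, eigenvalue M a -> a <= r.

(* Main.v *)
From HB Require Import structures.
From mathcomp Require Import all_boot all_order all_algebra.
From mathcomp Require Import complex ring lra.
Require Import Defs.
Set Implicit Arguments. Unset Strict Implicit. Unset Printing Implicit Defensive.
Import Order.TTheory GRing.Theory Num.Theory Num.Def.
Local Open Scope ring_scope.
Local Open Scope sesquilinear_scope.
Section Ray.
Variable R : rcfType.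
Local Notation f := (real_complex R).

Lemma realC (a : R) : (f a) \is Num.real.
Proof. by rewrite realE -(rmorph0 f) !lecR; apply: le_total. Qed.

Lemma realCE (z : R[i]) : z \is Num.real -> z = f (complex.Re z).
Proof.
case: z => a b; rewrite realE !lecE /= => /orP[]/andP[/eqP E _]; by [rewrite E; reflexivity | rewrite -E; reflexivity].
Qed.

Lemma rayleigh n (M : 'M[R]_n) r : M^T = M -> is_rho M r ->
  forall x : 'rV[R]_n, (x *m M *m x^T) 0 0 <= r * (x *m x^T) 0 0.
Proof.
move=> Msym [_ Hr] x.
set MC := map_mx f M.
have MCreal : MC \is a mxOver Num.real by apply/mxOverP=> i j; rewrite mxE realC.
have MCsym : MC \is symmetricmx.
  by apply/is_hermitianmxP; rewrite expr0 scale1r map_mx_id //; apply/matrixP=> i j; rewrite !mxE -[in RHS]Msym mxE.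
have Mherm := realsym_hermsym MCsym MCreal.
have /orthomx_spectralP MCE := hermitian_normalmx Mherm.
have Pu : spectralmx MC \is unitarymx := spectral_unitarymx MC.
have dreal := hermitian_spectral_diag_real Mherm.
move: MCE Pu dreal.
set P := spectralmx MC; set d := spectral_diag MC => MCE Pu dreal.
have Punit := unitarymx_unit Pu.
have PV : invmx P = P ^t* := invmx_unitary Pu.
have dle : forall j, d 0 j <= f r.
  move=> j.
  have dj_real : d 0 j \is Num.real by apply: (mxOverP dreal).
  have eigd : eigenvalue MC (d 0 j).
    apply/eigenvalueP; exists (row j P).
      rewrite -row_mul {1}MCE !mulmxA mulmxV // mul1mx.
      apply/rowP => k; rewrite !mxE (bigD1 j) //= big1 ?addr0 => [|i ij].
        by rewrite !mxE eqxx mulr1n.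
      by rewrite !mxE eq_sym (negbTE ij) mulr0n mul0r.
    apply/negP => /eqP H.
    have := congr1 (row j) (unitarymxP Pu).
    rewrite row_mul H mul0mx => /rowP/(_ j); rewrite !mxE eqxx /= => /eqP.
    by rewrite eq_sym oner_eq0.
  rewrite (realCE dj_real) lecR; apply: Hr; rewrite -(eigenvalue_map f); by move: eigd; rewrite {1}(realCE dj_real).
set xc := map_mx f x.
have xcC : xc ^t* = xc^T by apply/matrixP=> i j; rewrite !mxE conj_Creal // realC.
have E1 : f ((x *m M *m x^T) 0 0) = (xc *m MC *m xc ^t*) 0 0.
  by rewrite xcC map_trmx /xc /MC -!map_mxM [RHS]mxE.
have E2 : f ((x *m x^T) 0 0) = (xc *m xc ^t*) 0 0.
  by rewrite xcC map_trmx /xc -!map_mxM [RHS]mxE.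
rewrite -lecR E1.
have -> : f (r * (x *m x^T) 0 0) = f r * (xc *m xc ^t*) 0 0 by rewrite -E2 rmorphM.
set y := xc *m P ^t*.
have yC : y ^t* = P *m xc ^t*.
  by rewrite /y trmx_mul map_mxM trmxCK.
have E3 : xc *m MC *m xc ^t* = y *m diag_mx d *m y ^t*.
  by rewrite yC MCE PV /y !mulmxA.
have E4 : xc *m xc ^t* = y *m y ^t*.
  by rewrite yC /y !mulmxA -(mulmxA xc) -PV mulVmx // mulmx1.
rewrite E3 E4 mul_mx_diag !mxE mulr_sumr -subr_ge0 -sumrB; apply: sumr_ge0 => j _.
rewrite !mxE mulrAC [_ * d 0 j]mulrC -mulrBl.
by apply: mulr_ge0; [rewrite subr_ge0 | apply: mul_conjC_ge0].
Qed.
End Ray.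
Section T.
Variable R : rcfType.
Definition qf n (M : 'M[R]_n) (x : 'rV_n) := (x *m M *m x^T) 0 0.
Definition bf n (M : 'M[R]_n) (x y : 'rV_n) := (x *m M *m y^T) 0 0.

Lemma bf_sym n (M : 'M[R]_n) x y : M^T = M -> bf M y x = bf M x y.
Proof.
move=> Ms; rewrite /bf.
have -> : x *m M *m y^T = (y *m M *m x^T)^T by rewrite !trmx_mul trmxK Ms mulmxA.
by rewrite [RHS]mxE.
Qed.

Lemma qf_add n (M : 'M[R]_n) x y t : M^T = M ->
  qf M (x + t *: y) = qf M x + 2 * t * bf M x y + t ^+ 2 * qf M y.
Proof.
move=> Ms; rewrite /qf linearD /= linearZ /= !mulmxDl !mulmxDr.
rewrite -!scalemxAl -!scalemxAr.
have ED : forall A B : 'M[R]_1, (A + B) 0 0 = A 0 0 + B 0 0 by move=> A B; rewrite mxE.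
have EZ : forall a (A : 'M[R]_1), (a *: A) 0 0 = a * A 0 0 by move=> a A; rewrite mxE.
rewrite !ED !EZ.
have := bf_sym x y Ms; rewrite /bf => ->.
ring.
Qed.

Lemma aux_nra (b c t : R) : 0 <= c -> t * (c + 1) = - b ->
  0 <= 0 + 2 * t * b + t ^+ 2 * c -> b = 0.
Proof. move=> c0 ht h. nra. Qed.

Lemma psd_zero n (N : 'M[R]_n) x : N^T = N -> (forall v, 0 <= qf N v) ->
  qf N x = 0 -> x *m N = 0.
Proof.
move=> Ns Hpsd H0.
have bz : forall y, bf N x y = 0.
  move=> y; set b : R := bf N x y; set c : R := qf N y.
  have c0 : 0 <= c by apply: Hpsd.
  set t := - b / (c + 1).
  have c1 : 0 < c + 1 by rewrite ltr_wpDl // ltr01.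
  have ht : t * (c + 1) = - b by rewrite /t mulrVK // unitfE lt0r_neq0.
  have := Hpsd (x + t *: y); rewrite qf_add // H0 -/b -/c => h.
  by clearbody t b c; move: c0 ht h; apply: aux_nra.
apply/rowP => j; rewrite mxE.
have := bz (delta_mx 0 j); rewrite /bf trmx_delta -colE !mxE.
by [].
Qed.

Lemma E00D (A B : 'M[R]_1) : (A + B) 0 0 = A 0 0 + B 0 0. Proof. by rewrite mxE. Qed.
Lemma E00B (A B : 'M[R]_1) : (A - B) 0 0 = A 0 0 - B 0 0. Proof. by rewrite !mxE. Qed.
Lemma E00Z a (A : 'M[R]_1) : (a *: A) 0 0 = a * A 0 0. Proof. by rewrite mxE. Qed.

Lemma rayleigh_eq n (M : 'M[R]_n) r x : M^T = M -> is_rho M r ->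
  qf M x = r * (x *m x^T) 0 0 -> x *m M = r *: x.
Proof.
move=> Ms Mr Hx.
set N := r%:M - M.
have Ns : N^T = N by rewrite /N linearB /= tr_scalar_mx Ms.
have qN : forall v, qf N v = r * (v *m v^T) 0 0 - qf M v.
  move=> v; rewrite /qf /N mulmxBr mulmxBl mul_mx_scalar -scalemxAl.
  by rewrite E00B E00Z.
have psd : forall v, 0 <= qf N v by move=> v; rewrite qN subr_ge0; exact: rayleigh.
have h0 : qf N x = 0 by rewrite qN Hx subrr.
have /eqP := psd_zero Ns psd h0.
by rewrite /N mulmxBr mul_mx_scalar subr_eq0 => /eqP ->.
Qed.
End T.
Section G.
Variable R : rcfType.
Local Notation nrm x := ((x *m x^T) 0 0).

Lemma qf_lin n (M1 M2 : 'M[R]_n) a b x :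
  qf (a *: M1 + b *: M2) x = a * qf M1 x + b * qf M2 x.
Proof. by rewrite /qf mulmxDr mulmxDl -!scalemxAr -!scalemxAl E00D !E00Z. Qed.

Lemma qf_eig n (M : 'M[R]_n) r v : v *m M = r *: v -> qf M v = r * nrm v.
Proof. by move=> H; rewrite /qf H -scalemxAl E00Z. Qed.

Lemma nrmE n (x : 'rV[R]_n) : nrm x = \sum_j x 0 j ^+ 2.
Proof. by rewrite mxE; apply: eq_bigr => j _; rewrite mxE expr2. Qed.

Lemma nrm_ge0 n (x : 'rV[R]_n) : 0 <= nrm x.
Proof. by rewrite nrmE; apply: sumr_ge0 => j _; apply: sqr_ge0. Qed.

Lemma nrm_gt0 n (x : 'rV[R]_n) : x != 0 -> 0 < nrm x.
Proof.
move=> xn0.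
have [j xj] : exists j, x 0 j != 0.
  apply/existsP; apply: contraR xn0 => /existsPn H.
  by apply/eqP/rowP => j; rewrite mxE; apply/eqP/negPn/H.
rewrite nrmE (bigD1 j) //=; apply: ltr_pwDl; first by rewrite lt0r sqr_ge0 andbT sqrf_eq0.
by apply: sumr_ge0 => i _; apply: sqr_ge0.
Qed.

Lemma rho_uniq n (M : 'M[R]_n) r1 r2 : is_rho M r1 -> is_rho M r2 -> r1 = r2.
Proof.
by move=> [e1 h1] [e2 h2]; apply/le_anti; rewrite h1 // h2.
Qed.

Lemma rho_scale n (M : 'M[R]_n) r c : 0 < c -> is_rho M r -> is_rho (c *: M) (c * r).
Proof.
move=> c0 [/eigenvalueP[v vM vn0] h]; split.
  apply/eigenvalueP; exists v => //; by rewrite -scalemxAr vM scalerA mulrC.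
move=> a /eigenvalueP[w wM wn0].
have : w *m M = (a / c) *: w.
  apply: (@scalerI _ _ c); first by rewrite lt0r_neq0.
  by rewrite scalemxAr wM scalerA mulrC divfK // lt0r_neq0.
move=> wM'; have : a / c <= r by apply: h; apply/eigenvalueP; exists w.
by rewrite ler_pdivrMr // mulrC.
Qed.

Lemma weyl n (M1 M2 : 'M[R]_n) a b r r1 r2 :
  0 <= a -> 0 <= b -> is_rho (a *: M1 + b *: M2) r ->
  (forall x, qf M1 x <= r1 * nrm x) -> (forall x, qf M2 x <= r2 * nrm x) ->
  r <= a * r1 + b * r2.
Proof.
move=> a0 b0 [/eigenvalueP[v vM vn0] _] h1 h2.
have := qf_eig vM; rewrite qf_lin => E.
have p := nrm_gt0 vn0.
rewrite -(ler_pM2r p) -E mulrDl -!mulrA.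
by apply: lerD; apply: ler_wpM2l.
Qed.

Lemma aux_pos (a b p q : R) : 0 < a -> 0 < b -> 0 <= p -> 0 <= q ->
  a * p + b * q = 0 -> p = 0 /\ q = 0.
Proof. move=> *; split; nra. Qed.

Lemma weyl_eq n (M1 M2 : 'M[R]_n) a b r r1 r2 :
  0 < a -> 0 < b -> is_rho (a *: M1 + b *: M2) r ->
  (forall x, qf M1 x <= r1 * nrm x) -> (forall x, qf M2 x <= r2 * nrm x) ->
  r = a * r1 + b * r2 ->
  exists2 x : 'rV_n, x != 0 & qf M1 x = r1 * nrm x /\ qf M2 x = r2 * nrm x.
Proof.
move=> a0 b0 [/eigenvalueP[v vM vn0] _] h1 h2 Er.
exists v => //.
have := qf_eig vM; rewrite qf_lin Er => E.
have [p0 q0] : r1 * nrm v - qf M1 v = 0 /\ r2 * nrm v - qf M2 v = 0.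
  apply: (aux_pos a0 b0); rewrite ?subr_ge0 //.
  move: E; move: (qf M1 v) (qf M2 v) (nrm v) => p q m E.
  have -> : a * (r1 * m - p) + b * (r2 * m - q) = (a * r1 + b * r2) * m - (a * p + b * q) by ring.
  by rewrite E subrr.
by split; apply/eqP; rewrite eq_sym -subr_eq0; apply/eqP.
Qed.

Lemma rayleigh_eq' n (M : 'M[R]_n) r x : M^T = M ->
  (forall v, qf M v <= r * nrm v) ->
  qf M x = r * nrm x -> x *m M = r *: x.
Proof.
move=> Ms Mr Hx.
set N := r%:M - M.
have Ns : N^T = N by rewrite /N linearB /= tr_scalar_mx Ms.
have qN : forall v, qf N v = r * (v *m v^T) 0 0 - qf M v.
  move=> v; rewrite /qf /N mulmxBr mulmxBl mul_mx_scalar -scalemxAl.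
  by rewrite E00B E00Z.
have psd : forall v, 0 <= qf N v by move=> v; rewrite qN subr_ge0.
have h0 : qf N x = 0 by rewrite qN Hx subrr.
have /eqP := psd_zero Ns psd h0.
by rewrite /N mulmxBr mul_mx_scalar subr_eq0 => /eqP ->.
Qed.

Lemma qf_abs n (M : 'M[R]_n) x : (forall i j, 0 <= M i j) ->
  qf M x <= qf M (map_mx Num.norm x).
Proof.
move=> Mp; rewrite /qf !mxE; apply: ler_sum => j _.
rewrite !mxE !mulr_suml; apply: ler_sum => k _; rewrite !mxE.
apply: le_trans (ler_norm _) _.
by rewrite !normrM (ger0_norm (Mp _ _)).
Qed.

Lemma nrm_abs n (x : 'rV[R]_n) : nrm (map_mx Num.norm x) = nrm x.
Proof. by rewrite !nrmE; apply: eq_bigr => j _; rewrite mxE real_normK // num_real. Qed.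

Lemma abs_neq0 n (x : 'rV[R]_n) : x != 0 -> map_mx Num.norm x != 0.
Proof.
move=> xn0; apply/negP => /eqP H; move/negP: xn0; apply; apply/eqP/rowP => j.
by move/matrixP: H => /(_ 0 j); rewrite !mxE => /eqP; rewrite normr_eq0 => /eqP.
Qed.

End G.
Section Graph.
Variable R : rcfType.
Variable n : nat.
Variable e : rel 'I_n.
Hypothesis He : simple_graph e.
Local Notation nrm x := ((x *m x^T) 0 0).
Local Notation A := (adjmx R e).
Local Notation D := (degmx R e).
Local Notation Q := (Qmx R e).

Lemma A_sym : A^T = A.
Proof. by case: He => sy _; apply/matrixP => i j; rewrite !mxE sy. Qed.

Lemma D_sym : D^T = D.
Proof. by rewrite /degmx tr_diag_mx. Qed.

Lemma Q_sym : Q^T = Q.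
Proof. by rewrite /Qmx linearD /= A_sym D_sym. Qed.

Lemma A_ge0 i j : 0 <= A i j.
Proof. by rewrite mxE ler0n. Qed.

Lemma D_ge0 i j : 0 <= D i j.
Proof. by rewrite mxE; case: eqP => _; rewrite ?mulr1n ?mulr0n // mxE ler0n. Qed.

Lemma Q_ge0 i j : 0 <= Q i j.
Proof. by rewrite mxE addr_ge0 // ?A_ge0 ?D_ge0. Qed.

Lemma decomp1 a : Aalpha e a = a *: Q + (1 - 2 * a) *: A.
Proof. by apply/matrixP => i j; rewrite !mxE; ring. Qed.

Lemma decomp2 a : Aalpha e a = (1 - a) *: Q + (2 * a - 1) *: D.
Proof. by apply/matrixP => i j; rewrite !mxE; ring. Qed.

Lemma mulD_entry (z : 'rV[R]_n) i : (z *m D) 0 i = z 0 i * (deg e i)%:R.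
Proof. by rewrite /degmx mul_mx_diag !mxE. Qed.

Lemma qfD_le x : qf D x <= (maxdeg e)%:R * nrm x.
Proof.
rewrite /qf [X in X <= _]mxE nrmE mulr_sumr; apply: ler_sum => j _.
rewrite mulD_entry mxE mulrAC mulrC -expr2 ler_wpM2r ?sqr_ge0 // ler_nat.
exact: (leq_bigmax j).
Qed.

Lemma deg_le_max i : (deg e i <= maxdeg e)%N.
Proof. exact: (leq_bigmax i). Qed.

Lemma zero_prop (z : 'rV[R]_n) :
  connected_graph e -> z != 0 ->
  (forall i, z 0 i = 0 -> forall j, e i j -> z 0 j = 0) ->
  forall i, z 0 i != 0.
Proof.
move=> Hc zn0 hz i; apply/negP => /eqP zi.
move/negP: zn0; apply; apply/eqP/rowP => k; rewrite mxE.
have /connectP [p pth ->] := Hc i k.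
elim: p i zi pth => [|y p IH] i zi //=.
by move=> /andP [eiy pth]; apply: IH pth; apply: hz eiy.
Qed.

Lemma hz_A (z : 'rV[R]_n) : (forall i, 0 <= z 0 i) ->
  (forall i, z 0 i = 0 -> (z *m A) 0 i = 0) ->
  forall i, z 0 i = 0 -> forall j, e i j -> z 0 j = 0.
Proof.
move=> zp hA i zi j eij.
have := hA i zi; rewrite mxE => /psumr_eq0P H.
have := H (fun k _ => mulr_ge0 (zp k) (A_ge0 k i)) j isT; rewrite mxE.
by case: He => sy _; rewrite sy eij mulr1.
Qed.


Lemma QDA (z : 'rV[R]_n) : z *m Q = z *m D + z *m A.
Proof. by rewrite /Qmx mulmxDr. Qed.

Lemma not_irr (z : 'rV[R]_n) c : (forall i, z 0 i != 0) -> z *m D = c *: z ->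
  irregular e -> False.
Proof.
move=> pos zD [i [j hij]]; apply: hij.
have dc : forall k, (deg e k)%:R = c.
  move=> k; have /rowP/(_ k) := zD; rewrite mulD_entry mxE mulrC => /mulIf; apply.
  exact: pos.
by apply/eqP; rewrite -(eqr_nat R) !dc.
Qed.

Lemma abs_facts (x : 'rV[R]_n) : x != 0 ->
  map_mx Num.norm x != 0 /\ forall i, 0 <= (map_mx Num.norm x) 0 i.
Proof. by move=> xn0; split; [exact: abs_neq0 | move=> i; rewrite mxE normr_ge0]. Qed.

Lemma eq_case1 a rA rQ r : connected_graph e -> irregular e ->
  0 < a -> 0 < 1 - 2 * a -> is_rho A rA -> is_rho Q rQ -> is_rho (Aalpha e a) r ->
  r = a * rQ + (1 - 2 * a) * rA -> False.
Proof.
move=> Hc Hi a0 b0 HA HQ Hr Er.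
rewrite decomp1 in Hr.
have bQ := rayleigh Q_sym HQ; have bA := rayleigh A_sym HA.
have [x xn0 [eQ eA]] := weyl_eq a0 b0 Hr bQ bA Er.
have [zn0 zp] := abs_facts xn0.
move: zn0 zp; set z := map_mx Num.norm x => zn0 zp.
have eQz : qf Q z = rQ * nrm z.
  apply/le_anti; rewrite bQ /= /z nrm_abs -eQ; exact: qf_abs Q_ge0.
have eAz : qf A z = rA * nrm z.
  apply/le_anti; rewrite bA /= /z nrm_abs -eA; exact: qf_abs A_ge0.
have zQ := rayleigh_eq Q_sym HQ eQz.
have zA := rayleigh_eq A_sym HA eAz.
have hA : forall i, z 0 i = 0 -> (z *m A) 0 i = 0 by move=> i zi; rewrite zA mxE zi mulr0.
have pos := zero_prop Hc zn0 (hz_A zp hA).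
apply: (not_irr pos _ Hi) => //.
have : z *m D = z *m Q - z *m A by rewrite QDA addrK.
by rewrite zQ zA -scalerBl => ->.
Qed.

Lemma eq_case2 a rQ r : connected_graph e -> irregular e ->
  0 < 1 - a -> 0 < 2 * a - 1 -> is_rho Q rQ -> is_rho (Aalpha e a) r ->
  r = (1 - a) * rQ + (2 * a - 1) * (maxdeg e)%:R -> False.
Proof.
move=> Hc Hi a0 b0 HQ Hr Er.
rewrite decomp2 in Hr.
have bQ := rayleigh Q_sym HQ; have bD := qfD_le.
have [x xn0 [eQ eD]] := weyl_eq a0 b0 Hr bQ bD Er.
have [zn0 zp] := abs_facts xn0.
move: zn0 zp; set z := map_mx Num.norm x => zn0 zp.
have eQz : qf Q z = rQ * nrm z.
  apply/le_anti; rewrite bQ /= /z nrm_abs -eQ; exact: qf_abs Q_ge0.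
have eDz : qf D z = (maxdeg e)%:R * nrm z.
  apply/le_anti; rewrite bD /= /z nrm_abs -eD; exact: qf_abs D_ge0.
have zQ := rayleigh_eq Q_sym HQ eQz.
have zD := rayleigh_eq' D_sym bD eDz.
have hA : forall i, z 0 i = 0 -> (z *m A) 0 i = 0.
  move=> i zi; have : z *m A = z *m Q - z *m D by rewrite QDA addrAC subrr add0r.
  by move=> ->; rewrite zQ zD !mxE; move: zi; rewrite /z mxE => ->; rewrite !mulr0 subrr.
have pos := zero_prop Hc zn0 (hz_A zp hA).
exact: (not_irr pos zD Hi).
Qed.

Lemma D_eig (i0 : 'I_n) : eigenvalue D (maxdeg e)%:R.
Proof.
set i := [arg max_(i > i0) deg e i].
have Hm : maxdeg e = deg e i by rewrite /maxdeg (bigop.bigmax_eq_arg i0).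
apply/eigenvalueP; exists (delta_mx 0 i).
  apply/rowP => j; rewrite mulD_entry !mxE Hm eqxx /=.
  by case: (eqVneq j i) => [->|ji]; rewrite ?mulr1 ?mul1r ?mulr0 ?mul0r.
apply/negP => /eqP/rowP/(_ i); rewrite !mxE !eqxx /= => /eqP.
by rewrite oner_eq0.
Qed.

End Graph.

Lemma half_facts (R : rcfType) : 1 - 2 * (1 / 2 : R) = 0 /\ (0 : R) < 1 / 2.
Proof. split; lra. Qed.

Local Close Scope sesquilinear_scope.

Theorem proposition9 (R : rcfType) (n : nat) (e : rel 'I_n)
    (alpha rA rQ rAa : R) :
  simple_graph e ->
  is_rho (adjmx R e) rA ->
  is_rho (Qmx R e) rQ ->
  is_rho (Aalpha e alpha) rAa ->
  ((0 <= alpha <= 1 / 2 ->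
      rAa <= alpha * rQ + (1 - 2 * alpha) * rA /\
      (connected_graph e -> irregular e ->
         (rAa = alpha * rQ + (1 - 2 * alpha) * rA <->
          alpha = 0 \/ alpha = 1 / 2)))
   /\
   (1 / 2 <= alpha <= 1 ->
      rAa <= (1 - alpha) * rQ + (2 * alpha - 1) * (maxdeg e)%:R /\
      (connected_graph e -> irregular e ->
         (rAa = (1 - alpha) * rQ + (2 * alpha - 1) * (maxdeg e)%:R <->
          alpha = 1 / 2 \/ alpha = 1)))).
Proof.
move=> He HA HQ Hr.
have bQ := rayleigh (Q_sym R He) HQ; have bA := rayleigh (A_sym R He) HA.
have bD := @qfD_le R n e.
have [h2 h2p] := half_facts R.
have Ehalf : Aalpha e (1 / 2) = (1 / 2) *: Qmx R e.
  by rewrite decomp1 h2 scale0r addr0.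
split.
- move=> /andP[a0 a1].
  have ineq : rAa <= alpha * rQ + (1 - 2 * alpha) * rA.
    apply: (weyl _ _ _ bQ bA) => //; [lra | by rewrite -decomp1].
  split => // Hc Hi; split.
  + move=> Eq.
    have [->|an0] := eqVneq alpha 0; first by left.
    have [->|an1] := eqVneq alpha (1/2); first by right.
    exfalso; apply: (eq_case1 He Hc Hi _ _ HA HQ Hr Eq).
      by rewrite lt_neqAle eq_sym an0 a0.
    have : alpha < 1/2 by rewrite lt_neqAle an1 a1.
    lra.
  + case=> Ea; rewrite Ea in Hr *.
    * have E : Aalpha e 0 = adjmx R e by rewrite /Aalpha scale0r add0r subr0 scale1r.
      rewrite E in Hr; rewrite (rho_uniq Hr HA); ring.
    * rewrite Ehalf in Hr; rewrite (rho_uniq Hr (rho_scale h2p HQ)) h2; ring.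
- move=> /andP[a0 a1].
  have ineq : rAa <= (1 - alpha) * rQ + (2 * alpha - 1) * (maxdeg e)%:R.
    apply: (weyl _ _ _ bQ bD) => //; [lra | lra | by rewrite -decomp2].
  split => // Hc Hi; split.
  + move=> Eq.
    have [->|an0] := eqVneq alpha (1/2); first by left.
    have [->|an1] := eqVneq alpha 1; first by right.
    exfalso; apply: (eq_case2 He Hc Hi _ _ HQ Hr Eq).
      have : alpha < 1 by rewrite lt_neqAle an1 a1.
      lra.
    have : 1/2 < alpha by rewrite lt_neqAle eq_sym an0 a0.
    lra.
  + case=> Ea; rewrite Ea in Hr ineq *.
    * rewrite Ehalf in Hr; rewrite (rho_uniq Hr (rho_scale h2p HQ)); lra.
    * have E : Aalpha e 1 = degmx R e by rewrite /Aalpha subrr scale0r addr0 scale1r.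
      rewrite E in Hr.
      have [i0 _] : exists j : 'I_n, true.
        case: Hr => /eigenvalueP[v _ vn0] _.
        apply/existsP; apply: contraR vn0 => /existsPn H.
        by apply/eqP/rowP => j; have := H j.
      apply/le_anti; rewrite {1}ineq /=.
      case: Hr => _ Hr; have := Hr _ (@D_eig R n e i0).
      move: ((maxdeg e)%:R : R) => m hm. clear -hm; lra.
Qed.
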